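(* In the standing setup, with the convention $x_\infty:=x_{\infty+1}:=0$, we have for all $1\le m<n\le\infty$: $$0\le\big\langle x_{m+1}-x_{n+1},\,(x_m-x_{m+1})-(x_n-x_{n+1})\big\rangle.$$
   Context: Standing setup. $X$ is a real Hilbert space. $u\colon[0,\infty)\to X$ satisfies $\langle u(s),u(t)\rangle=\exp(-(s-t)^2)$ for all $s,t\ge0$. $(d_n)_{n\ge1}$ satisfies: $d_n>0$, $\sum_k d_k^2<\infty$, $t_n:=\sum_{k=1}^{n-1}d_k\to+\infty$, $d_1\le1/8$, $d_{n+1}\le d_n/(1+64d_n^2)$ for all $n$. $\rho_1:=1$, $\rho_{n+1}:=\rho_n\exp(-d_n^2)$, $x_n:=\rho_nu(t_n)$. *)

(* Defs.v *)
From Stdlib Require Import Reals Lra.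
Open Scope R_scope.

Record RealHilbertSpace := {
  hcar :> Type;
  hzero : hcar;
  hadd : hcar -> hcar -> hcar;
  hopp : hcar -> hcar;
  hscal : R -> hcar -> hcar;
  hinner : hcar -> hcar -> R;
  hadd_assoc : forall x y z, hadd x (hadd y z) = hadd (hadd x y) z;
  hadd_comm : forall x y, hadd x y = hadd y x;
  hadd_zero : forall x, hadd x hzero = x;
  hadd_opp : forall x, hadd x (hopp x) = hzero;
  hscal_one : forall x, hscal 1 x = x;
  hscal_mul : forall a b x, hscal a (hscal b x) = hscal (a * b) x;
  hscal_addr : forall a x y, hscal a (hadd x y) = hadd (hscal a x) (hscal a y);
  hscal_addl : forall a b x, hscal (a + b) x = hadd (hscal a x) (hscal b x);
  hinner_sym : forall x y, hinner x y = hinner y x;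
  hinner_addl : forall x y z, hinner (hadd x y) z = hinner x z + hinner y z;
  hinner_scall : forall a x y, hinner (hscal a x) y = a * hinner x y;
  hinner_pos : forall x, 0 <= hinner x x;
  hinner_def : forall x, hinner x x = 0 -> x = hzero;
  hcomplete : forall s : nat -> hcar,
    (forall eps, eps > 0 -> exists N, forall p q, (p >= N)%nat -> (q >= N)%nat ->
        sqrt (hinner (hadd (s p) (hopp (s q))) (hadd (s p) (hopp (s q)))) < eps) ->
    exists l, forall eps, eps > 0 -> exists N, forall p, (p >= N)%nat ->
        sqrt (hinner (hadd (s p) (hopp l)) (hadd (s p) (hopp l))) < eps
}.

Arguments hzero {_}.
Arguments hadd {_}.
Arguments hopp {_}.
Arguments hinner {_}.

Definition hsub {X : RealHilbertSpace} (x y : X) : X := hadd x (hopp y).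

(* t_n := sum_{k=1}^{n-1} d_k  (for n >= 1; the value at n = 0 is irrelevant) *)
Fixpoint tseq (d : nat -> R) (n : nat) : R :=
  match n with
  | O => 0
  | S p => match p with O => 0 | _ => tseq d p + d p end
  end.

Fixpoint rhoseq (d : nat -> R) (n : nat) : R :=
  match n with
  | O => 1
  | S p => match p with O => 1 | _ => rhoseq d p * exp (- (d p) ^ 2) end
  end.

Definition xseq {X : RealHilbertSpace} (u : R -> X) (d : nat -> R) (n : nat) : X :=
  hscal X (rhoseq d n) (u (tseq d n)).

(* Main.v *)
Require Import Defs.
From Stdlib Require Import Reals Lra Lia Psatz.
Open Scope R_scope.

Lemma inner_zero_l (X : RealHilbertSpace) (y : X) : hinner hzero y = 0.
Proof. pose proof (hinner_addl X hzero hzero y) as H. rewrite hadd_zero in H. lra. Qed.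

Lemma inner_opp_l (X : RealHilbertSpace) (x y : X) : hinner (hopp x) y = - hinner x y.
Proof. pose proof (hinner_addl X x (hopp x) y) as H. rewrite hadd_opp, inner_zero_l in H. lra. Qed.

Lemma inner_subl (X : RealHilbertSpace) (x y z : X) : hinner (hsub x y) z = hinner x z - hinner y z.
Proof. unfold hsub. rewrite hinner_addl, inner_opp_l. ring. Qed.

Lemma inner_subr (X : RealHilbertSpace) (x y z : X) : hinner x (hsub y z) = hinner x y - hinner x z.
Proof. rewrite hinner_sym, inner_subl, (hinner_sym X y), (hinner_sym X z). reflexivity. Qed.

Lemma inner_scal (X : RealHilbertSpace) a b (x y : X) : hinner (hscal X a x) (hscal X b y) = a * b * hinner x y.
Proof. rewrite hinner_scall, hinner_sym, hinner_scall, hinner_sym. ring. Qed.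

Lemma t_S d k : (1 <= k)%nat -> tseq d (S k) = tseq d k + d k.
Proof. intros; destruct k; [lia | reflexivity]. Qed.

Lemma rho_S d k : (1 <= k)%nat -> rhoseq d (S k) = rhoseq d k * exp (- (d k)^2).
Proof. intros; destruct k; [lia | reflexivity]. Qed.

Lemma t_nonneg d (Hdpos : forall n, (1 <= n)%nat -> 0 < d n) n : 0 <= tseq d n.
Proof.
  induction n. simpl; lra.
  destruct n. simpl; lra.
  rewrite t_S by lia. pose proof (Hdpos (S n)) as H. assert (0 < d (S n)) by (apply H; lia). lra.
Qed.

Lemma rho_pos d n : 0 < rhoseq d n.
Proof.
  induction n. simpl; lra.
  destruct n. simpl; lra.
  rewrite rho_S by lia. pose proof (exp_pos (- d (S n) ^ 2)). nra.
Qed.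

Lemma t_mono d (Hdpos : forall n, (1 <= n)%nat -> 0 < d n) m n :
  (1 <= m)%nat -> (m <= n)%nat -> tseq d m <= tseq d n.
Proof.
  intros Hm Hmn. induction Hmn. lra.
  rewrite t_S by lia. pose proof (Hdpos m0). assert (0 < d m0) by (apply H; lia). lra.
Qed.

Lemma step_inv d (Hdpos : forall n, (1 <= n)%nat -> 0 < d n)
  (Hdec : forall n, (1 <= n)%nat -> d (S n) <= d n / (1 + 64 * d n ^ 2)) n :
  (1 <= n)%nat -> / d n + 64 * d n <= / d (S n).
Proof.
  intros Hn. pose proof (Hdpos n Hn) as Hx. pose proof (Hdpos (S n) ltac:(lia)) as Hy.
  pose proof (Hdec n Hn) as H.
  set (x := d n) in *. set (y := d (S n)) in *.
  assert (Hc : 0 < 1 + 64 * x ^ 2) by nra.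
  assert (H2 : y * (1 + 64 * x ^ 2) <= x).
  { assert (x / (1 + 64 * x ^ 2) * (1 + 64 * x ^ 2) = x) by (field; lra).
    rewrite <- H0 at 2. apply Rmult_le_compat_r; lra. }
  assert (E : / y - (/ x + 64 * x) = (x - y * (1 + 64 * x ^ 2)) / (y * x)) by (field; lra).
  assert (0 <= (x - y * (1 + 64 * x ^ 2)) / (y * x)).
  { unfold Rdiv. apply Rmult_le_pos. lra. left. apply Rinv_0_lt_compat. nra. }
  lra.
Qed.

Lemma key d (Hdpos : forall n, (1 <= n)%nat -> 0 < d n)
  (Hdec : forall n, (1 <= n)%nat -> d (S n) <= d n / (1 + 64 * d n ^ 2)) m n :
  (1 <= m)%nat -> (m <= n)%nat -> 64 * (tseq d n - tseq d m) <= / d n - / d m.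
Proof.
  intros Hm Hmn. induction Hmn. lra.
  rewrite t_S by lia. pose proof (step_inv d Hdpos Hdec m0 ltac:(lia)). lra.
Qed.

Lemma exp_core a b : 0 <= a -> 0 <= b -> 2 * a * b <= b - a -> exp a + exp (- b) <= 2.
Proof.
  intros Ha Hb H.
  assert (Ha1 : a < 1) by nra.
  pose proof (exp_ineq1_le (- a)) as E1. pose proof (exp_ineq1_le b) as E2.
  assert (P1 : exp a * exp (- a) = 1) by (rewrite <- exp_plus; replace (a + - a) with 0 by ring; apply exp_0).
  assert (P2 : exp (- b) * exp b = 1) by (rewrite <- exp_plus; replace (- b + b) with 0 by ring; apply exp_0).
  pose proof (exp_pos a). pose proof (exp_pos (-b)).
  assert (Q1 : exp a * (1 - a) <= 1) by nra.
  assert (Q2 : exp (- b) * (1 + b) <= 1) by nra.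
  assert (R1 : exp a <= / (1 - a)).
  { apply Rmult_le_reg_r with (1 - a). lra. rewrite Rinv_l by lra. lra. }
  assert (R2 : exp (- b) <= / (1 + b)).
  { apply Rmult_le_reg_r with (1 + b). lra. rewrite Rinv_l by lra. lra. }
  assert (/ (1 - a) + / (1 + b) <= 2).
  { assert (E : 2 - (/ (1 - a) + / (1 + b)) = (b - a - 2 * a * b) / ((1 - a) * (1 + b))) by (field; lra).
    assert (0 <= (b - a - 2 * a * b) / ((1 - a) * (1 + b))).
    { unfold Rdiv. apply Rmult_le_pos. lra. left. apply Rinv_0_lt_compat. nra. }
    lra. }
  lra.
Qed.
Lemma Gx (X : RealHilbertSpace) (u : R -> X) d
  (Hu : forall s t, 0 <= s -> 0 <= t -> hinner (u s) (u t) = exp (- (s - t) ^ 2))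
  (Hdpos : forall n, (1 <= n)%nat -> 0 < d n) i j :
  hinner (xseq u d i) (xseq u d j) = rhoseq d i * rhoseq d j * exp (- (tseq d i - tseq d j) ^ 2).
Proof. unfold xseq. rewrite inner_scal, Hu by (apply t_nonneg; auto). reflexivity. Qed.

Lemma d_dec d (Hdpos : forall n, (1 <= n)%nat -> 0 < d n)
  (Hdec : forall n, (1 <= n)%nat -> d (S n) <= d n / (1 + 64 * d n ^ 2)) m n :
  (1 <= m)%nat -> (m <= n)%nat -> d n <= d m.
Proof.
  intros Hm Hmn. induction Hmn. lra.
  pose proof (step_inv d Hdpos Hdec m0 ltac:(lia)).
  pose proof (Hdpos m0 ltac:(lia)). pose proof (Hdpos (S m0) ltac:(lia)).
  assert (/ d m0 <= / d (S m0)) by lra.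
  assert (d (S m0) <= d m0).
  { destruct (Rle_lt_dec (d (S m0)) (d m0)) as [h|h]; auto.
    apply Rinv_lt_contravar in h; nra. }
  lra.
Qed.

Lemma finite_case (X : RealHilbertSpace) (u : R -> X) (d : nat -> R)
  (Hu : forall s t, 0 <= s -> 0 <= t -> hinner (u s) (u t) = exp (- (s - t) ^ 2))
  (Hdpos : forall n, (1 <= n)%nat -> 0 < d n)
  (Hdec : forall n, (1 <= n)%nat -> d (S n) <= d n / (1 + 64 * d n ^ 2)) m n :
  (1 <= m)%nat -> (m < n)%nat ->
     0 <= hinner (hsub (xseq u d (S m)) (xseq u d (S n)))
                 (hsub (hsub (xseq u d m) (xseq u d (S m)))
                       (hsub (xseq u d n) (xseq u d (S n)))).
Proof.
intros H H0.
pose proof (t_mono d Hdpos (S m) (S n) ltac:(lia) ltac:(lia)) as Tm.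
pose proof (key d Hdpos Hdec m n ltac:(lia) ltac:(lia)) as K.
pose proof (d_dec d Hdpos Hdec m n ltac:(lia) ltac:(lia)) as Dd.
pose proof (Hdpos m ltac:(lia)) as Pm. pose proof (Hdpos n ltac:(lia)) as Pn.
pose proof (rho_pos d m) as Rm. pose proof (rho_pos d n) as Rn.
rewrite !inner_subl, !inner_subr, !(Gx X u d Hu Hdpos).
rewrite (t_S d m), (t_S d n), (rho_S d m), (rho_S d n) in * by lia.
set (tm := tseq d m) in *. set (tn := tseq d n) in *. set (dm := d m) in *. set (dn := d n) in *.
set (rm := rhoseq d m) in *. set (rn := rhoseq d n) in *.
set (D := tn + dn - (tm + dm)).
assert (Z : forall x, exp (- (x - x) ^ 2) = 1) by (intro; replace (- (x - x) ^ 2) with 0 by ring; apply exp_0).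
rewrite !Z.
replace (- (tm + dm - tm) ^ 2) with (- dm ^ 2) by ring.
replace (- (tn + dn - tn) ^ 2) with (- dn ^ 2) by ring.
replace (- (tm + dm - (tn + dn)) ^ 2) with (- D ^ 2) by (unfold D; ring).
replace (- (tn + dn - (tm + dm)) ^ 2) with (- D ^ 2) by (unfold D; ring).
replace (- (tm + dm - tn) ^ 2) with (- D ^ 2 + 2 * D * dn + - dn ^ 2) by (unfold D; ring).
replace (- (tn + dn - tm) ^ 2) with (- D ^ 2 + - (2 * D * dm) + - dm ^ 2) by (unfold D; ring).
rewrite !exp_plus.
assert (Core : exp (2 * D * dn) + exp (- (2 * D * dm)) <= 2).
{ assert (HD : 0 <= D) by (unfold D; lra).
  assert (HD2 : D <= tn - tm) by (unfold D; lra).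
  assert (E : (/ dn - / dm) * (dm * dn) = dm - dn) by (field; lra).
  assert (F : 64 * D * (dm * dn) <= dm - dn).
  { rewrite <- E. apply Rmult_le_compat_r. nra. lra. }
  apply exp_core; nra. }
pose proof (exp_pos (- dm ^ 2)). pose proof (exp_pos (- dn ^ 2)). pose proof (exp_pos (- D ^ 2)).
set (em := exp (- dm ^ 2)) in *. set (en := exp (- dn ^ 2)) in *. set (E0 := exp (- D ^ 2)) in *.
set (ea := exp (2 * D * dn)) in *. set (eb := exp (- (2 * D * dm))) in *.
assert (Pos : 0 < rm * em * rn * en * E0) by (repeat apply Rmult_lt_0_compat; auto).
assert (0 <= rm * em * rn * en * E0 * (2 - ea - eb)) by (apply Rmult_le_pos; lra).
replace (rm * em * rm * em - rm * em * (rm * em) * 1 -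
  (rm * em * rn * (E0 * ea * en) - rm * em * (rn * en) * E0) -
  (rn * en * rm * (E0 * eb * em) - rn * en * (rm * em) * E0 -
   (rn * en * rn * en - rn * en * (rn * en) * 1)))
 with (rm * em * rn * en * E0 * (2 - ea - eb)) by ring.
lra.
Qed.

Lemma inner_zero_r (X : RealHilbertSpace) (y : X) : hinner y hzero = 0.
Proof. rewrite hinner_sym; apply inner_zero_l. Qed.

Theorem lemma6p3 (X : RealHilbertSpace) (u : R -> X) (d : nat -> R)
  (Hu : forall s t, 0 <= s -> 0 <= t -> hinner (u s) (u t) = exp (- (s - t) ^ 2))
  (Hdpos : forall n, (1 <= n)%nat -> 0 < d n)
  (Hsq : exists l, Un_cv (fun N => sum_f_R0 (fun k => d (S k) ^ 2) N) l)
  (Ht : cv_infty (tseq d))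
  (Hd1 : d 1%nat <= 1 / 8)
  (Hdec : forall n, (1 <= n)%nat -> d (S n) <= d n / (1 + 64 * d n ^ 2)) :
  (* finite case 1 <= m < n < oo *)
  (forall m n : nat, (1 <= m)%nat -> (m < n)%nat ->
     0 <= hinner (hsub (xseq u d (S m)) (xseq u d (S n)))
                 (hsub (hsub (xseq u d m) (xseq u d (S m)))
                       (hsub (xseq u d n) (xseq u d (S n))))) /\
  (* case n = oo, with x_oo := x_{oo+1} := 0 *)
  (forall m : nat, (1 <= m)%nat ->
     0 <= hinner (hsub (xseq u d (S m)) hzero)
                 (hsub (hsub (xseq u d m) (xseq u d (S m)))
                       (hsub (@hzero X) hzero))).
Proof.
split.
- intros; apply finite_case; auto.
- intros m H.
  rewrite !inner_subl, !inner_subr, !inner_zero_l, !inner_zero_r, !(Gx X u d Hu Hdpos).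
  rewrite (t_S d m), (rho_S d m) by lia.
  replace (- (tseq d m + d m - tseq d m) ^ 2) with (- d m ^ 2) by ring.
  replace (- (tseq d m + d m - (tseq d m + d m)) ^ 2) with 0 by ring.
  rewrite exp_0. lra.
Qed.
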